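(* Let $G=A_n$ be the alternating group with $n\ge 5$, and let $p$ be an odd prime dividing $|G|$. Then $d_{p'}(G)\le 1/(p-1)$. Furthermore, equality holds if and only if $p=5$ and $n=5$ (i.e. $G=A_5\cong\mathrm{PSL}_2(5)$).
   Context: For a finite group $G$ and prime $p$, $k_{p'}(G)$ denotes the number of conjugacy classes of elements of $G$ whose order is not divisible by $p$, $|G|_{p'}$ is the largest divisor of $|G|$ coprime to $p$, and $d_{p'}(G)=k_{p'}(G)/|G|_{p'}$. *)

(* Defs.v *)
From mathcomp Require Import all_boot all_order all_algebra all_fingroup all_solvable.
Set Implicit Arguments. Unset Strict Implicit. Unset Printing Implicit Defensive.

Definition kp' (gT : finGroupType) (p : nat) (G : {set gT}) : nat :=
  #|[set (x ^: G)%g | x in G & (p^'.-elt x)%g]|.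

Definition dp' (gT : finGroupType) (p : nat) (G : {set gT}) : rat :=
  ((kp' p G)%:R / (#|G|`_p^')%:R)%R.

(* Main.v *)
Require Import Defs.
From mathcomp Require Import all_boot all_order all_algebra all_fingroup all_solvable.
From mathcomp Require Import zify.
Set Implicit Arguments. Unset Strict Implicit. Unset Printing Implicit Defensive.
Import GRing.Theory Num.Theory.

Fixpoint bl (l : seq nat) (k : nat) : nat :=
  match l with
  | [::] => k
  | a :: l' => if k < a then (if k.+1 < a then k.+1 else 0) else a + bl l' (k - a)
  end.

Section Flat.
Variables (T : eqType) (f : T -> T) (d : T).

Definition cyc (t : seq T) := 0 < size t /\
  forall j, j < size t -> f (nth d t j) = nth d t (if j.+1 < size t then j.+1 else 0).

Lemma bl_flatten (ts : seq (seq T)) : (forall t, t \in ts -> cyc t) ->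
  forall k, k < size (flatten ts) ->
  bl (map size ts) k < size (flatten ts) /\
  f (nth d (flatten ts) k) = nth d (flatten ts) (bl (map size ts) k).
Proof.
elim: ts => [|t ts IH] Hc k //=.
have [Ht0 Ht] := Hc t (mem_head _ _).
have IH' : forall k, k < size (flatten ts) -> _ := IH (fun u Hu => Hc u (mem_behead (s := t :: ts) Hu)).
rewrite size_cat => Hk.
case: (ltnP k (size t)) => Hkt.
  rewrite !nth_cat Hkt Ht //.
  case: ifP => H1; first by rewrite H1; split=> //; lia.
  by rewrite Ht0; split=> //; lia.
have Hk' : k - size t < size (flatten ts) by lia.
have [Hb Hf] := IH' _ Hk'.
split; first by lia.
by rewrite !nth_cat ltnNge Hkt /= ltnNge leq_addr /= Hf addKn.
Qed.
End Flat.

Section Orb.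
Variable n : nat.
Local Notation T := 'I_n.
Implicit Types x : {perm T}.

Definition canon x (y : T) : T := odflt y [pick z in porbit x y].
Definition reps x : seq T :=
  sort (fun a b => #|porbit x b| <= #|porbit x a|) (undup [seq canon x y | y <- enum T]).
Definition ct x : seq nat := [seq #|porbit x r| | r <- reps x].
Definition lst x : seq T := flatten [seq traject x r #|porbit x r| | r <- reps x].

Lemma canon_in x y : canon x y \in porbit x y.
Proof. by rewrite /canon; case: pickP => [z ->|/(_ y)] //=; rewrite porbit_id. Qed.

Lemma porbit_canon x y : porbit x (canon x y) = porbit x y.
Proof. by apply/eqP; rewrite eq_porbit_mem canon_in. Qed.

Lemma canon_eq x y y' : porbit x y = porbit x y' -> canon x y = canon x y'.
Proof.
move=> E; rewrite /canon E.
case: pickP => [//|/(_ y)]; by rewrite -E porbit_id.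
Qed.

Lemma mem_reps x r : (r \in reps x) = (r \in [seq canon x y | y <- enum T]).
Proof. by rewrite mem_sort mem_undup. Qed.

Lemma uniq_reps x : uniq (reps x).
Proof. by rewrite sort_uniq undup_uniq. Qed.

Lemma reps_inj x r r' : r \in reps x -> r' \in reps x -> porbit x r = porbit x r' -> r = r'.
Proof.
rewrite !mem_reps => /mapP[y _ ->] /mapP[y' _ ->].
rewrite !porbit_canon => E; exact: canon_eq.
Qed.

Lemma uniq_lst x : uniq (lst x).
Proof.
rewrite /lst; have := uniq_reps x; have : {subset reps x <= reps x} by [].
elim: {-2}(reps x) => [|r s IH] //= Hsub /andP[rs us].
have Hsub' : {subset s <= reps x} by move=> z zs; apply: Hsub; rewrite inE zs orbT.
rewrite cat_uniq (IH Hsub' us) andbT uniq_traject_porbit /=.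
apply/hasPn => z /flatten_mapP[r' r's zr'] /=; apply/negP => zr.
have rin : r \in reps x by apply: Hsub; rewrite mem_head.
have r'in : r' \in reps x by apply: Hsub; rewrite inE r's orbT.
have E : porbit x r = porbit x r'.
  rewrite -porbit_traject in zr; rewrite -porbit_traject in zr'.
  have E1 : porbit x z = porbit x r by apply/eqP; rewrite eq_porbit_mem.
  have E2 : porbit x z = porbit x r' by apply/eqP; rewrite eq_porbit_mem.
  by rewrite -E1 E2.
by move: rs; rewrite (reps_inj rin r'in E) r's.
Qed.
End Orb.

Section Orb2.
Variable n : nat.
Local Notation T := 'I_n.
Implicit Types x : {perm T}.

Lemma mem_lst x z : z \in lst x.
Proof.
apply/flatten_mapP; exists (canon x z).
  by rewrite mem_reps; apply: map_f; rewrite mem_enum.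
by rewrite -porbit_traject porbit_canon porbit_id.
Qed.

Lemma size_lst x : size (lst x) = n.
Proof.
rewrite -[RHS](card_ord n) -(card_uniqP (uniq_lst x)); apply: eq_card => z.
by rewrite mem_lst.
Qed.

Lemma sum_ct x : sumn (ct x) = n.
Proof.
rewrite -[RHS](size_lst x) /lst size_flatten /shape -map_comp /ct.
by congr sumn; apply: eq_map => r /=; rewrite size_traject.
Qed.

Lemma ct_pos x : all (fun a => 0 < a) (ct x).
Proof. by apply/allP => a /mapP[r _ ->]; rewrite lt0n card_porbit_neq0. Qed.

Lemma ct_sorted x : sorted geq (ct x).
Proof.
rewrite sorted_map; apply: sort_sorted => a b /=; exact: leq_total.
Qed.

Lemma size_ct x : size (ct x) = #|porbits x|.
Proof.
rewrite size_map size_sort.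
rewrite -(card_uniqP (undup_uniq _)) -(card_in_imset (f := porbit x)).
  apply: eq_card => A; apply/imsetP/imsetP => [[r] | [y _ ->]].
    by rewrite mem_undup => /mapP[y _ ->] ->; exists y => //; rewrite porbit_canon.
  by exists (canon x y); rewrite ?porbit_canon // mem_undup; apply: map_f; rewrite mem_enum.
move=> r r'; rewrite !mem_undup => rin r'in E.
have := reps_inj (x := x) (r := r) (r' := r'); rewrite !mem_reps; exact.
Qed.

Lemma cyc_traj x d r : cyc x d (traject x r #|porbit x r|).
Proof.
have m0 : 0 < #|porbit x r| by rewrite lt0n card_porbit_neq0.
rewrite /cyc size_traject; split=> // j jm.
rewrite (set_nth_default r) ?size_traject // nth_traject //.
case: ifP => H.
  by rewrite (set_nth_default r) ?size_traject // nth_traject // iterS.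
rewrite (set_nth_default r) ?size_traject // nth_traject //=.
have Hm : j.+1 = #|porbit x r| by lia.
by rewrite -iterS Hm iter_porbit.
Qed.

Definition blf (l : seq nat) (i : T) : T := insubd i (bl l i).
Definition blocky (l : seq nat) : {perm T} := odflt (1%g : {perm T}) (insub [ffun i => blf l i]).

Lemma blockyE l : injective (blf l) -> forall i, blocky l i = blf l i.
Proof.
move=> inj i; rewrite /blocky insubT /=; first by apply/injectiveP => a b; rewrite !ffunE; exact: inj.
by move=> H; rewrite -pvalE /= ffunE.
Qed.

Lemma conj_blocky_aux x : injective (blf (ct x)) /\ exists g : {perm T}, x = (blocky (ct x) ^ g)%g.
Proof.
pose L := lst x.
pose gf (i : T) : T := nth i L i.
have gfE i d : gf i = nth d L i by rewrite /gf (set_nth_default d) // size_lst.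
have ginj : injective gf.
  move=> i j; rewrite (gfE i i) (gfE j i) => /eqP.
  by rewrite nth_uniq ?size_lst ?ltn_ord ?uniq_lst // => /eqP/val_inj.
have key i : x (gf i) = gf (blf (ct x) i).
  have H1 : forall t, t \in [seq traject x r #|porbit x r| | r <- reps x] -> cyc x i t.
    by move=> t /mapP[r _ ->]; apply: cyc_traj.
  have H2 : val i < size (flatten [seq traject x r #|porbit x r| | r <- reps x]).
    move: (size_lst x); rewrite /lst => E; rewrite E; exact: ltn_ord.
  have [Hb Hf] := @bl_flatten _ x i _ H1 _ H2. rewrite -map_comp in Hb Hf.
  have Em : [seq (size \o (fun r => traject x r #|porbit x r|)) r | r <- reps x] = ct x.
    by apply: eq_map => r /=; rewrite size_traject.
  rewrite Em -/(lst x) size_lst in Hb Hf.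
  by rewrite (gfE i i) Hf (gfE _ i) /blf insubdK.
have binj : injective (blf (ct x)).
  by move=> i j E; apply: ginj; apply: (@perm_inj _ x); rewrite !key E.
split=> //; exists (perm ginj).
apply/permP => i; rewrite conjgE !permM blockyE //.
rewrite -{1}[i](permKV (perm ginj)) !permE; exact: key.
Qed.
Lemma conj_blocky x : exists g : {perm T}, x = (blocky (ct x) ^ g)%g.
Proof. by case: (conj_blocky_aux x). Qed.
Lemma blf_inj x : injective (blf (ct x)).
Proof. by case: (conj_blocky_aux x). Qed.
End Orb2.

Section Count.
Variables n p : nat.
Local Notation T := 'I_n.
Local Notation G := ('Alt_T)%g.
Open Scope group_scope.

Definition tf (i j k : nat) : nat := if k == i then j else if k == j then i else k.
Definition blN (l : seq nat) (k : nat) : nat := if bl l k < n then bl l k else k.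
Definition flag (l : seq nat) : bool :=
  has (fun i => has (fun j => (i != j) && all (fun k => tf i j (blN l k) == blN l (tf i j k)) (iota 0 n)) (iota 0 n)) (iota 0 n).

Lemma val_blf l (i : T) : val (blf l i) = blN l i.
Proof. by rewrite /blf val_insubd. Qed.

Lemma tpermE (i j k : T) : val (tperm i j k) = tf i j k.
Proof.
rewrite /tf; case: tpermP => [->|->|/eqP ni /eqP nj]; rewrite ?eqxx //.
  by case: eqP => // /val_inj ->.
by rewrite (inj_eq val_inj) (negbTE ni) (inj_eq val_inj) (negbTE nj).
Qed.

Lemma flagP l : injective (@blf n l) -> flag l ->
  exists t : {perm T}, odd_perm t /\ blocky n l ^ t = blocky n l.
Proof.
move=> inj /hasP[i]; rewrite mem_iota /= => ilt /hasP[j]; rewrite mem_iota /= => jlt /andP[nij /allP H].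
exists (tperm (Ordinal ilt) (Ordinal jlt)); rewrite odd_tperm -(inj_eq val_inj) /= nij; split=> //.
rewrite conjgE; apply: (mulgI (tperm (Ordinal ilt) (Ordinal jlt))); rewrite mulgA mulgV mul1g.
apply/permP => k; rewrite !permM !blockyE //; apply: val_inj.
rewrite tpermE !val_blf tpermE /=; apply/eqP; apply: H.
by rewrite mem_iota /=.
Qed.

Definition cg (u : {perm T}) : {perm T} := odflt 1 [pick g | u == blocky n (ct u) ^ g].

Lemma cgP u : u = blocky n (ct u) ^ cg u.
Proof.
rewrite /cg; case: pickP => [g /eqP //|H].
by have [g Hg] := conj_blocky u; move: (H g); rewrite -Hg eqxx.
Qed.

Definition psi (X : {set {perm T}}) : seq nat * bool :=
  (ct (repr X), if flag (ct (repr X)) then false else odd_perm (cg (repr X))).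

Lemma same_class (b u v g h : {perm T}) : u = b ^ g -> v = b ^ h -> odd_perm g = odd_perm h ->
  v \in u ^: G.
Proof.
move=> -> -> Eo; apply/imsetP; exists (g^-1 * h); last by rewrite -conjgM mulKVg.
by rewrite Alt_even odd_permM odd_permV Eo addbb.
Qed.

Lemma even_conj (b u t : {perm T}) : u = b ^ t -> odd_perm t -> b ^ t = b ->
  exists g, u = b ^ g /\ odd_perm g = false.
Proof. Abort.

Definition Lst (Lam : seq (seq nat)) : seq (seq nat * bool) :=
  [seq (l, c) | l <- Lam, c <- if flag l then [:: false] else [:: false; true]].

Lemma kp'_le (Lam : seq (seq nat)) :
  (forall u, u \in G -> p^'.-elt u -> ct u \in Lam) -> kp' p G <= size (Lst Lam).
Proof.
move=> HL; rewrite /kp' cardE -(size_map psi).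
set C := [set _ | _ in _ & _].
have memC X : X \in C -> [/\ repr X \in G, p^'.-elt (repr X) & X = repr X ^: G].
  case/imsetP=> x; rewrite inE => /andP[xG px] ->.
  have : repr (x ^: G) \in x ^: G by apply: (mem_repr x); apply: class_refl.
  move=> Hr; case/imsetP: (Hr) => a aG Ea; split.
  - by rewrite Ea groupJ.
  - by rewrite Ea /= p_eltJ.
  - by apply/esym/class_eqP.
apply: uniq_leq_size.
  rewrite map_inj_in_uniq ?enum_uniq // => X Y; rewrite !mem_enum => XC YC.
  case/memC: XC => uG _ EX; case/memC: YC => vG _ EY.
  rewrite /psi; case => Ect Eo; rewrite -Ect in Eo.
  set u := repr X in uG EX Ect Eo *; set v := repr Y in vG EY Ect Eo *.
  have Hu := cgP u; have Hv := cgP v; rewrite -Ect in Hv.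
  suff: v \in u ^: G by move/class_eqP; rewrite EX EY => ->.
  move: Eo; case: ifP => Hf Eo; last exact: same_class Hu Hv Eo.
  have [t [ot Ht]] := flagP (@blf_inj n u) Hf.
  have ev (w : {perm T}) : w = blocky n (ct u) ^ cg w -> exists g, w = blocky n (ct u) ^ g /\ odd_perm g = false.
    move=> Hw; case Og: (odd_perm (cg w)); last by exists (cg w).
    by exists (t * cg w); rewrite conjgM Ht odd_permM ot Og.
  have [g1 [H1 O1]] := ev u Hu; have [g2 [H2 O2]] := ev v Hv.
  by apply: same_class H1 H2 _; rewrite O1 O2.
move=> z /mapP[X]; rewrite mem_enum => /memC[uG pu EX] ->.
rewrite /psi /Lst; apply/allpairsPdep; exists (ct (repr X)), (if flag (ct (repr X)) then false else odd_perm (cg (repr X))).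
split=> //; first exact: HL.
by case: flag => //; case: odd_perm; rewrite !inE.
Qed.

Lemma size_Lst Lam : size (Lst Lam) <= 2 * size Lam.
Proof.
elim: Lam => [|l Lam IH] //=; rewrite /Lst /= size_cat -/(Lst Lam).
rewrite size_map; case: flag => /=; lia.
Qed.

End Count.

Definition inc_head (l : seq nat) := if l is a :: l' then a.+1 :: l' else l.
Fixpoint comps (m : nat) : seq (seq nat) :=
  match m with
  | 0 => [:: [::]]
  | 1 => [:: [:: 1]]
  | m'.+1 => map (cons 1) (comps m') ++ map inc_head (comps m')
  end.

Lemma size_comps m : size (comps m.+1) = 2 ^ m.
Proof.
elim: m => [|m IH] //.
by rewrite [comps _]/= size_cat !size_map IH expnS mul2n addnn.
Qed.

Lemma mem_comps m l : all (fun a => 0 < a) l -> sumn l = m -> l \in comps m.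
Proof.
elim: m l => [|m IH] [|a l] //=.
  by move=> /andP[a0 _]; lia.
move=> /andP[a0 lp] E.
case: m IH E => [|m] IH E.
  have a1 : a = 1 by lia.
  have l0 : sumn l = 0 by lia.
  clear IH E; case: l lp l0 => [|b l] /=; last by move=> /andP[b0 _]; lia.
  by rewrite a1.
rewrite mem_cat; case: (ltnP 1 a) => Ha.
  apply/orP; right; apply/mapP; exists (a.-1 :: l); last by rewrite /= prednK //; lia.
  by apply: IH => /=; [rewrite lp andbT; lia | lia].
have a1 : a = 1 by lia.
apply/orP; left; apply/mapP; exists l; last by rewrite a1.
by apply: IH => //; lia.
Qed.

Definition parts m := [seq l <- comps m | sorted geq l].

Definition ptest n p (l : seq nat) : bool :=
  ~~ (all (fun k => iter p (blN n l) k == k) (iota 0 n) && has (fun k => blN n l k != k) (iota 0 n)).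

Section Props.
Variables n p : nat.
Hypothesis pr_p : prime p.
Local Notation G := ('Alt_('I_n))%g.
Open Scope group_scope.

Lemma ct_comps (u : {perm 'I_n}) : ct u \in comps n.
Proof. by apply: mem_comps; [apply: ct_pos | apply: sum_ct]. Qed.

Lemma ct_parts (u : {perm 'I_n}) : ct u \in parts n.
Proof. by rewrite mem_filter ct_sorted ct_comps. Qed.

Lemma ct_even (u : {perm 'I_n}) : u \in G -> odd n = odd (size (ct u)).
Proof.
rewrite Alt_even /odd_perm card_ord size_ct.
by case: (odd n); case: (odd _).
Qed.

Lemma ct_ptest (u : {perm 'I_n}) : p^'.-elt u -> ptest n p (ct u).
Proof.
move=> pu; apply/negP => /andP[/allP H1' /hasP[k0 k0lt Hk0]].
rewrite mem_iota /= in k0lt.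
have viter m (i : 'I_n) : val (iter m (blf (ct u)) i) = iter m (blN n (ct u)) i.
  by elim: m => //= m IH; rewrite val_blf IH.
have H1 : forall i : 'I_n, iter p (blf (ct u)) i == i.
  by move=> i; rewrite -(inj_eq val_inj) viter; apply: H1'; rewrite mem_iota /=.
pose k := Ordinal k0lt.
have Hk : blf (ct u) k != k by rewrite -(inj_eq val_inj) val_blf.
have [g Hg] := conj_blocky u.
have pb : p^'.-elt (blocky n (ct u)) by rewrite -(p_eltJ _ _ g) -Hg.
have bp : (blocky n (ct u) ^+ p = 1).
  by apply/permP => i; rewrite permX perm1 (eq_iter (blockyE (@blf_inj n u))); apply/eqP/H1.
have b1 : blocky n (ct u) != 1.
  by apply/eqP => /permP /(_ k); rewrite perm1 blockyE ?(eqP Hk) //; [move/eqP: Hk | apply: blf_inj].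
have d : (#[blocky n (ct u)] %| p) by rewrite order_dvdn bp.
have : #[blocky n (ct u)] != 1%N by rewrite order_eq1.
move/(prime_nt_dvdP pr_p)/(_ d) => Eo.
by move: pb; rewrite /p_elt Eo p'natE // dvdnn.
Qed.
End Props.

Lemma p'partE (p : nat) m : 0 < m -> m`_p^' = m %/ p ^ logn p m.
Proof. by move=> m0; rewrite -p_part -{2}(partnC p m0) mulKn // part_gt0. Qed.

Lemma prime_dvd_fact_le p m : prime p -> p %| m`! -> p <= m.
Proof.
move=> pp; elim: m => [|m IH]; first by rewrite dvdn1 => /eqP p1; rewrite p1 in pp.
rewrite factS Euclid_dvdM // => /orP[/dvdn_leq -> //| /IH]; lia.
Qed.

Lemma p'part_id p m : prime p -> ~~ (p %| m) -> 0 < m -> m`_p^' = m.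
Proof. by move=> pp npm m0; apply: part_pnat_id; rewrite p'natE. Qed.

Lemma fact_bound m : 8 <= m -> 2 ^ (m + 3) * m.+1 < m`!.
Proof.
elim: m => [|m IH] //; rewrite leq_eqVlt => /orP[/eqP <- //| H].
have {}IH := IH H.
rewrite factS addSn expnS.
have : 2 * m.+2 <= m.+1 * m.+1 by nia.
nia.
Qed.

Lemma NL m p : 8 <= m -> prime p -> 3 <= p -> p <= m -> 2 ^ m.+1 * p.-1 < (m`!)`_p^'.
Proof.
move=> m8 pp p3 pm.
have step : forall m, 8 <= m -> (forall p, prime p -> 3 <= p -> p <= m -> 2 ^ m.+1 * p.-1 < (m`!)`_p^') ->
   forall p, prime p -> 3 <= p -> p <= m.+2 -> 2 ^ m.+3 * p.-1 < (m.+2`!)`_p^'.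
  clear pp p3 pm m8 m p => m m8 IH p pp p3 pm.
  have fE : (m.+2`!)`_p^' = (m.+2)`_p^' * ((m.+1)`_p^' * (m`!)`_p^').
    by rewrite !factS !partnM // ?muln_gt0 ?fact_gt0.
  have g1 := part_gt0 p^' m.+2; have g2 := part_gt0 p^' m.+1.
  have g3 := part_gt0 p^' (m`!).
  case: (leqP p m) => Hpm.
    have IHp := IH p pp p3 Hpm.
    have : m.+1 <= (m.+2)`_p^' * (m.+1)`_p^'.
      case Hd: (p %| m.+1).
        have Hd2 : ~~ (p %| m.+2).
          apply/negP => H2; have := dvdn_sub H2 Hd.
          have -> : m.+2 - m.+1 = 1 by lia.
          by rewrite dvdn1 => /eqP p1; move: p3; rewrite p1.
        rewrite (p'part_id pp Hd2) //; nia.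
      rewrite (p'part_id pp (negbT Hd)) //; nia.
    rewrite fE expnS expnS; nia.
  have Hnd : ~~ (p %| m`!) by apply/negP => /(prime_dvd_fact_le pp); lia.
  rewrite fE (p'part_id pp Hnd (fact_gt0 m)).
  have Hf := fact_bound m8.
  have Hp : p.-1 <= m.+1 by lia.
  rewrite -addn3; move: Hf; move: (2 ^ (m + 3)) => A Hf.
  apply: (leq_ltn_trans (leq_mul (leqnn A) Hp)); apply: (leq_trans Hf).
  rewrite mulnA; apply: leq_pmull; by rewrite muln_gt0 g1 g2.
have base8 : forall p, prime p -> 3 <= p -> p <= 8 -> 2 ^ 9 * p.-1 < (8`!)`_p^'.
  move=> q qp q3 q8; rewrite p'partE ?fact_gt0 //.
  case: q q3 q8 qp => [|[|[|[|[|[|[|[|[|q]]]]]]]]] //= _ _; by vm_compute.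
have base9 : forall p, prime p -> 3 <= p -> p <= 9 -> 2 ^ 10 * p.-1 < (9`!)`_p^'.
  move=> q qp q3 q9; rewrite p'partE ?fact_gt0 //.
  case: q q3 q9 qp => [|[|[|[|[|[|[|[|[|[|q]]]]]]]]]] //= _ _; by vm_compute.
suff: forall k, (forall p, prime p -> 3 <= p -> p <= k + 8 -> 2 ^ (k + 8).+1 * p.-1 < ((k + 8)`!)`_p^') /\
               (forall p, prime p -> 3 <= p -> p <= k + 9 -> 2 ^ (k + 9).+1 * p.-1 < ((k + 9)`!)`_p^').
  move=> H; have := H (m - 8); have -> : m - 8 + 8 = m by lia.
  by case=> H1 _; apply: H1.
elim=> [|k [IH1 IH2]]; first by split.
split; first by have -> : k.+1 + 8 = k + 9 by lia.
have -> : k.+1 + 9 = (k + 8).+2 by lia.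
by apply: step => //; lia.
Qed.

Definition small n p := size (Lst n [seq l <- parts n | (odd n == odd (size l)) && ptest n p l]).

Lemma small_bound n p : prime p -> kp' p ('Alt_('I_n))%g <= small n p.
Proof.
move=> pp; apply: kp'_le => u uG pu.
by rewrite mem_filter ct_parts (ct_even uG) eqxx (ct_ptest pp pu).
Qed.

Lemma gen_bound n p : 0 < n -> kp' p ('Alt_('I_n))%g <= 2 ^ n.
Proof.
move=> n0.
have H1 := @kp'_le n p (comps n) (fun u _ _ => ct_comps u).
have H2 := leq_trans H1 (size_Lst n (comps n)).
move: H2; clear H1.
case: n n0 => [|n] n0 //.
by rewrite size_comps -expnS.
Qed.

Lemma rat_le (k M q : nat) : 0 < M -> 0 < q ->
  ((k%:R / M%:R : rat) <= 1 / q%:R)%R = (k * q <= M).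
Proof.
move=> M0 q0.
by rewrite ler_pdivrMr ?ltr0n // mul1r mulrC ler_pdivlMr ?ltr0n // -natrM ler_nat.
Qed.

Lemma rat_eq (k M q : nat) : 0 < M -> 0 < q ->
  ((k%:R / M%:R : rat) = 1 / q%:R)%R <-> (k * q = M).
Proof.
move=> M0 q0; split => [/eqP|E].
  rewrite eqr_div ?pnatr_eq0 -?lt0n // mul1r -natrM eqr_nat => /eqP //.
by apply/eqP; rewrite eqr_div ?pnatr_eq0 -?lt0n // mul1r -natrM E.
Qed.

Section A5.
Open Scope group_scope.
Let o (i : nat) (H : i < 5) : 'I_5 := Ordinal H.
Let a : {perm 'I_5} := tperm (o (isT : 0 < 5)) (o (isT : 1 < 5)) * tperm (o (isT : 2 < 5)) (o (isT : 3 < 5)).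
Let b : {perm 'I_5} := tperm (o (isT : 0 < 5)) (o (isT : 1 < 5)) * tperm (o (isT : 1 < 5)) (o (isT : 2 < 5)).
Let G := ('Alt_('I_5)).

Lemma aG : a \in G. Proof. by rewrite Alt_even odd_permM !odd_tperm. Qed.
Lemma bG : b \in G. Proof. by rewrite Alt_even odd_permM !odd_tperm. Qed.
Lemma a2 : a ^+ 2 = 1.
Proof.
apply/permP => k; apply: val_inj; rewrite permX perm1 /= !permM !tpermE.
by case: k => [[|[|[|[|[|k]]]]] Hk].
Qed.
Lemma b3 : b ^+ 3 = 1.
Proof.
apply/permP => k; apply: val_inj; rewrite permX perm1 /= !permM !tpermE.
by case: k => [[|[|[|[|[|k]]]]] Hk].
Qed.
Lemma b2 : b ^+ 2 != 1.
Proof.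
apply/eqP => /permP /(_ (o (isT : 0 < 5))) /(congr1 val).
by rewrite permX perm1 /= !permM !tpermE.
Qed.
Lemma a1 : a != 1.
Proof.
apply/eqP => /permP /(_ (o (isT : 0 < 5))) /(congr1 val).
by rewrite perm1 /= !permM !tpermE.
Qed.

Lemma A5_lower : 3 <= kp' 5 G.
Proof.
rewrite /kp' cardE.
set C := [set _ | _ in _ & _].
have inC (x : {perm 'I_5}) : x \in G -> 5^'.-elt x -> x ^: G \in C.
  by move=> xG px; apply/imsetP; exists x => //; rewrite inE xG.
have cl1 (x y : {perm 'I_5}) : y \in x ^: G -> exists g, y = x ^ g.
  by case/imsetP => g _ ->; exists g.
have pa : 5^'.-elt a.
  by apply: (@pnat_dvd _ 2); [rewrite order_dvdn a2 | rewrite p'natE].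
have pb : 5^'.-elt b.
  by apply: (@pnat_dvd _ 3); [rewrite order_dvdn b3 | rewrite p'natE].
suff : size [:: 1 ^: G; a ^: G; b ^: G] <= size (enum C) by [].
apply: uniq_leq_size.
  rewrite /= !inE !negb_or andbT; apply/andP; split; [apply/andP; split|]; apply/eqP => E.
  - have := class_refl G a; rewrite -E => /cl1[g]; rewrite conj1g => /eqP; apply/negP; exact: a1.
  - have := class_refl G b; rewrite -E => /cl1[g]; rewrite conj1g => Eb.
    by move: b2; rewrite Eb expg1n eqxx.
  - have := class_refl G b; rewrite -E => /cl1[g] Eb.
    by move: b2; rewrite Eb -conjXg a2 conj1g eqxx.
move=> X; rewrite !inE mem_enum => /or3P[] /eqP ->; apply: inC;
  by [apply: group1 | apply: p_elt1 | apply: aG | apply: bG | assumption].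
Qed.
End A5.

Lemma key (n p : nat) :
  5 <= n -> prime p -> odd p -> p %| #|('Alt_('I_n))%g| ->
  let k := kp' p ('Alt_('I_n))%g in let M := #|('Alt_('I_n))%g|`_p^' in
  if (n == 5) && (p == 5) then k * p.-1 = M else k * p.-1 < M.
Proof.
move=> n5 pp podd pdvd k M.
have cardG : 2 * #|('Alt_('I_n))%g| = n`!.
  by have := @card_Alt ('I_n); rewrite card_ord; apply; lia.
have pn : p <= n.
  by apply: prime_dvd_fact_le => //; rewrite -cardG dvdn_mull.
have p3 : 3 <= p.
  by clear k M; case: p pp podd {pdvd pn} => [|[|[|]]].
have n2 : ~~ (p %| 2) by apply/negP => /dvdn_leq; lia.
have fM : (n`!)`_p^' = 2 * M.
  rewrite -cardG partnM // ?cardG_gt0 // (p'part_id pp n2) //.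
case: (leqP 8 n) => n8.
  have -> : (n == 5) && (p == 5) = false by apply/negbTE; rewrite negb_and; apply/orP; left; apply/eqP; lia.
  have Hk : k <= 2 ^ n by apply: gen_bound; lia.
  have HN := NL n8 pp p3 pn.
  rewrite fM expnS in HN.
  apply: (leq_ltn_trans (leq_mul Hk (leqnn p.-1))); nia.
have Hk := small_bound n pp.
have cG : #|('Alt_('I_n))%g| = n`! %/ 2 by rewrite -cardG mulKn.
rewrite /M cG; rewrite /k in Hk *; clear k M fM cardG pdvd.
have : (n = 5) \/ (n = 6) \/ (n = 7) by lia.
case=> [En|[En|En]]; subst n.
- have -> : 5`! %/ 2 = 60 by vm_compute.
  have : p = 3 \/ p = 5 by case: p pp podd pn p3 {n2 Hk cG} => [|[|[|[|[|[|p]]]]]] //= *; lia.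
  case=> Ep; subst p; rewrite p'partE //.
  + have -> : 60 %/ 3 ^ logn 3 60 = 20 by vm_compute.
    rewrite (_ : small 5 3 = 4) in Hk; last by vm_compute. simpl; lia.
  + have -> : 60 %/ 5 ^ logn 5 60 = 12 by vm_compute.
    rewrite (_ : small 5 5 = 3) in Hk; last by vm_compute. simpl.
    have := A5_lower; lia.
- have -> : 6`! %/ 2 = 360 by vm_compute.
  have : p = 3 \/ p = 5 by case: p pp podd pn p3 {n2 Hk cG} => [|[|[|[|[|[|[|p]]]]]]] //= *; lia.
  case=> Ep; subst p; rewrite p'partE //.
  + have -> : 360 %/ 3 ^ logn 3 360 = 40 by vm_compute.
    rewrite (_ : small 6 3 = 5) in Hk; last by vm_compute. simpl; lia.
  + have -> : 360 %/ 5 ^ logn 5 360 = 72 by vm_compute.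
    rewrite (_ : small 6 5 = 6) in Hk; last by vm_compute. simpl; lia.
- have -> : 7`! %/ 2 = 2520 by vm_compute.
  have : p = 3 \/ p = 5 \/ p = 7 by case: p pp podd pn p3 {n2 Hk cG} => [|[|[|[|[|[|[|[|p]]]]]]]] //= *; lia.
  case=> [Ep|[Ep|Ep]]; subst p; rewrite p'partE //.
  + have -> : 2520 %/ 3 ^ logn 3 2520 = 280 by vm_compute.
    rewrite (_ : small 7 3 = 7) in Hk; last by vm_compute. simpl; lia.
  + have -> : 2520 %/ 5 ^ logn 5 2520 = 504 by vm_compute.
    rewrite (_ : small 7 5 = 9) in Hk; last by vm_compute. simpl; lia.
  + have -> : 2520 %/ 7 ^ logn 7 2520 = 360 by vm_compute.
    rewrite (_ : small 7 7 = 8) in Hk; last by vm_compute. simpl; lia.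
Qed.

Theorem proposition3p4 (n p : nat) :
  5 <= n -> prime p -> odd p -> p %| #|('Alt_('I_n))%g| ->
  (dp' p ('Alt_('I_n))%g <= 1 / (p.-1)%:R)%R /\
  (dp' p ('Alt_('I_n))%g = (1 / (p.-1)%:R)%R <-> p = 5 /\ n = 5).
Proof.
move=> n5 pp podd pdvd.
have K := key n5 pp podd pdvd; simpl in K.
have p3 : 2 < p by move: pp podd; clear; case: p => [|[|[|]]].
have q0 : 0 < p.-1 by lia.
have M0 := part_gt0 p^' #|('Alt_('I_n))%g|.
rewrite /dp'; split.
  rewrite rat_le //; move: K; case: ifP => _ H; [by rewrite H | exact: ltnW].
rewrite rat_eq //; move: K; case: ifP => [/andP[/eqP -> /eqP ->] H //| nb H].
split; first by move=> E; move: H; rewrite E ltnn.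
by case=> Ep En; move: nb; rewrite Ep En.
Qed.
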